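(* Let $\sqrt{2} = (1.b_1 b_2 b_3 \cdots)_2$ be the binary expansion of $\sqrt 2$ and $b = b_1 b_2 b_3 \cdots$ the infinite binary word of its fractional digits. For integers $n \geq 2$, let $L_n(x) = \left\lfloor \frac{x(2^n - x)}{2^{n-2}} \right\rfloor$ for $x \in X_n = \{1, 2, \dots, 2^n - 1\}$, and call $n$ undesirable if there exists $x \in X_n$ with $L_n(x) = 2^{n-1}$. Let $d_N$ be the number of undesirable parameters $n$ with $2 \le n \leq N$. Then $$\liminf_{N \to \infty} \frac{d_N}{N} \geq \frac{5 r_{\inf}(b) - 2}{3} \quad\text{and}\quad \limsup_{N \to \infty} \frac{d_N}{N} \geq \frac{5 r_{\sup}(b) - 2}{3},$$ where $r_{\inf}(b) = \liminf_{n\to\infty} |Z(b^{(n)})|/n$ and $r_{\sup}(b) = \limsup_{n\to\infty} |Z(b^{(n)})|/n$. In particular, if $r_{\sup}(b) > 2/5$, then there are infinitely many undesirable parameters.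
   Context: For a binary word $w = w_1 w_2 \cdots$, $w^{(n)}$ denotes its initial subword of length $n$, and $Z(w)$ is the set of indices $i$ with $w_i = 0$; thus $|Z(b^{(n)})|$ is the number of zeros among $b_1, \dots, b_n$. *)

(* Defs.v *)
From HB Require Import structures.
From mathcomp Require Import all_boot all_order all_algebra.
From mathcomp Require Import all_classical all_reals all_analysis.
Set Implicit Arguments. Unset Strict Implicit. Unset Printing Implicit Defensive.
Import Order.TTheory GRing.Theory Num.Theory.
Local Open Scope ring_scope.

(* k-th binary digit (k >= 1) of sqrt 2 after the binary point:
   b_k = floor(2^k * sqrt 2) mod 2. *)
Definition sqrt2_digit (R : realType) (k : nat) : int :=
  ((Num.floor (Num.sqrt (2 : R) * 2 ^+ k)) %% 2)%Z.

Definition zeros_prefix (R : realType) (n : nat) : nat :=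
  count (fun k => sqrt2_digit R k == 0) (iota 1 n).

Definition undesirable (n : nat) : bool :=
  [exists x : 'I_(2 ^ n), (0 < x)%N &&
     ((x * (2 ^ n - x)) %/ 2 ^ (n - 2) == 2 ^ (n - 1))%N].

Definition d_count (N : nat) : nat :=
  count undesirable (index_iota 2 N.+1).

Definition r_inf (R : realType) : R :=
  limn_inf (fun n : nat => (zeros_prefix R n)%:R / n%:R : R).
Definition r_sup (R : realType) : R :=
  limn_sup (fun n : nat => (zeros_prefix R n)%:R / n%:R : R).

(* Main.v *)
Require Import Defs.
From HB Require Import structures.
From mathcomp Require Import all_boot all_order all_algebra.
From mathcomp Require Import all_classical all_reals all_analysis.
From mathcomp Require Import zify ring lra.
Import Order.TTheory GRing.Theory Num.Theory numFieldNormedType.Exports.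
Local Open Scope ring_scope.

Section Digits.
Variable R : realType.
Definition A (k : nat) : int := Num.floor (Num.sqrt (2 : R) * 2 ^+ k).
Definition fr (k : nat) : R := Num.sqrt (2 : R) * 2 ^+ k - (A k)%:~R.
Definition sz (k : nat) : bool := sqrt2_digit R k == 0.

Lemma fr_ge0 k : 0 <= fr k.
Proof. by rewrite /fr subr_ge0 /A floor_le. Qed.
Lemma fr_lt1 k : fr k < 1.
Proof. rewrite /fr /A; have := floorD1_gt (Num.sqrt (2 : R) * 2 ^+ k); rewrite intrD; lra. Qed.

Lemma A_step k : exists e : int, (e == 0) || (e == 1) /\ A k.+1 = A k * 2 + e.
Proof.
exists (A k.+1 - A k * 2).
split; last by rewrite addrC subrK.
have E : Num.sqrt (2:R) * 2 ^+ k.+1 = 2 * (Num.sqrt 2 * 2^+k) by rewrite exprS; ring.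
have h0 := floor_le (Num.sqrt (2 : R) * 2 ^+ k).
have h0' := floorD1_gt (Num.sqrt (2 : R) * 2 ^+ k).
have h1 : A k * 2 <= A k.+1.
  rewrite /A floor_ge_int E intrM; rewrite intrD in h0'; lra.
have h2 : A k.+1 < A k * 2 + 2.
  rewrite /A floor_lt_int E intrD intrM; rewrite intrD in h0'; lra.
lia.
Qed.

Lemma fr_step k : fr k.+1 = 2 * fr k - (if sz k.+1 then 0 else 1).
Proof.
have [e [He HA]] := A_step k.
have Hd : sz k.+1 = (e == 0).
  rewrite /sz /sqrt2_digit -/(A k.+1) HA modzMDl modz_small //.
  by case/orP: He => /eqP ->.
rewrite Hd /fr HA intrD intrM exprS.
case/orP: He => /eqP -> /=; rewrite ?eqxx /=; ring.
Qed.
End Digits.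

Definition goodf (z : nat -> bool) i := z i && (z i.+1 || (~~ z i.+1 && z i.+2 && z i.+3)
   || (~~ z i.+1 && z i.+2 && ~~ z i.+3 && z i.+4)).

Lemma good_fr (R : realType) k : goodf (sz R) k.+1 -> fr R k < 11/32.
Proof.
have s0 := fr_step R k; have s1 := fr_step R k.+1; have s2 := fr_step R k.+2.
have s3 := fr_step R k.+3; have s4 := fr_step R k.+4.
have := fr_ge0 R k; have := fr_ge0 R k.+1; have := fr_ge0 R k.+2; have := fr_ge0 R k.+3;
have := fr_ge0 R k.+4; have := fr_ge0 R k.+4.+1.
have := fr_lt1 R k; have := fr_lt1 R k.+1; have := fr_lt1 R k.+2; have := fr_lt1 R k.+3;
have := fr_lt1 R k.+4; have := fr_lt1 R k.+4.+1.
rewrite /goodf; move: s0 s1 s2 s3 s4.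
case: (sz R k.+1); case: (sz R k.+2); case: (sz R k.+3); case: (sz R k.+4); case: (sz R k.+4.+1) => //=; lra.
Qed.

Lemma good_undes (R : realType) k : goodf (sz R) k.+1 -> undesirable k.+2.
Proof.
move=> /good_fr Hf.
have f0 := fr_ge0 R k.
set s := Num.sqrt (2:R).
have s0 : 0 <= s by exact: sqrtr_ge0.
have s2 : s * s = 2 by rewrite -expr2 sqr_sqrtr.
have Ak0 : (0 <= A R k)%R by rewrite /A floor_ge0 mulr_ge0 // exprn_ge0.
set y := `|A R k|%N.
have Hy : (y%:R : R) = (A R k)%:~R.
  by rewrite /y natr_absz ger0_norm.
set q := (2 ^ k)%N.
have Hq : (q%:R : R) = 2 ^+ k by rewrite /q natrX.
have t0 : (0 : R) < 2 ^+ k by rewrite exprn_gt0.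
have Hfy : fr R k = s * 2 ^+ k - y%:R by rewrite Hy.
rewrite Hfy in Hf f0.
have y0 : (0 : R) <= y%:R by [].
have sf : s * (s * 2 ^+ k - y%:R) < 1/2 by nra.
have R1 : ((y * y)%N%:R : R) <= (2 * (q * q))%N%:R.
  rewrite !natrM Hq; nra.
have R2 : ((2 * (q * q))%N%:R : R) < (y * y + q)%N%:R.
  rewrite !natrD !natrM Hq; nra.
have R3 : (y%:R : R) < (2 * q)%N%:R.
  rewrite natrM Hq.
  have : s < 2 by nra.
  nra.
move: R1 R2 R3; rewrite ler_nat !ltr_nat => R1 R2 R3.
have q0 : (0 < q)%N by rewrite /q expn_gt0.
have E4 : (2 ^ k.+2 = 4 * q)%N by rewrite /q !expnS; lia.
have Hx : (2 * q - y < 2 ^ k.+2)%N by rewrite E4; lia.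
apply/existsP; exists (Ordinal Hx) => /=.
have -> : (k.+2 - 2 = k)%N by lia.
have -> : (k.+2 - 1 = k.+1)%N by lia.
rewrite E4 -/q expnS.
have Em : ((2 * q - y) * (4 * q - (2 * q - y)) = 4 * (q * q) - y * y)%N.
  have -> : (4 * q - (2 * q - y) = 2 * q + y)%N by lia.
  nia.
rewrite Em; apply/andP; split; first lia.
rewrite eqn_leq leq_divRL // -ltnS ltn_divLR //.
apply/andP; split; nia.
Qed.

Definition phiB (a b c d : bool) : nat :=
  if a then (if b then 4 else if c then 4 else 3)
  else if b then (if c then 2 else if d then 2 else 1) else 0.
Definition phi (z : nat -> bool) i := phiB (z i) (z i.+1) (z i.+2) (z i.+3).

Lemma local_ineq (z : nat -> bool) i : (5 * z i + phi z i.+1 <= 3 * goodf z i + 2 + phi z i)%N.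
Proof.
rewrite /phi /goodf /phiB.
by case: (z i); case: (z i.+1); case: (z i.+2); case: (z i.+3); case: (z i.+4).
Qed.

Lemma sum_ineq (z : nat -> bool) n : forall m,
  (5 * count z (iota m n) + phi z (m + n) <= 3 * count (goodf z) (iota m n) + 2 * n + phi z m)%N.
Proof.
elim: n => [|n IH] m /=; first by rewrite addn0.
have := IH m.+1; have := local_ineq z m.
rewrite addSnnS; lia.
Qed.

Lemma phi_le4 (z : nat -> bool) i : (phi z i <= 4)%N.
Proof. rewrite /phi /phiB; by case: (z i); case: (z i.+1); case: (z i.+2); case: (z i.+3). Qed.

Lemma count_bound (R : realType) N :
  (5 * zeros_prefix R N <= 3 * d_count N + 2 * N + 9)%N.
Proof.
have H1 : (count (goodf (sz R)) (iota 1 N.-1) <= d_count N)%N.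
  rewrite /d_count /index_iota.
  have -> : (N.+1 - 2 = N.-1)%N by lia.
  have -> : iota 2 N.-1 = map S (map S (iota 0 N.-1)) by rewrite -!(iotaDl 1).
  have -> : iota 1 N.-1 = map S (iota 0 N.-1) by rewrite -!(iotaDl 1).
  rewrite !count_map; apply: sub_count => i /=; exact: good_undes.
have H2 := sum_ineq (sz R) N.-1 1.
have H3 := phi_le4 (sz R) (1 + N.-1).
have H4 : (zeros_prefix R N <= count (sz R) (iota 1 N.-1) + 1)%N.
  rewrite /zeros_prefix; clear; case: N => [|N]; first by [].
  have -> : iota 1 N.+1 = iota 1 N ++ [:: 1 + N] by rewrite -[N.+1]addn1 iotaD.
  rewrite count_cat /= -/(sz R (1 + N)) addn0.
  have := leq_b1 (sz R (1 + N)); rewrite /sz; lia.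
have H5 := phi_le4 (sz R) 1. lia.
Qed.

Local Open Scope classical_set_scope.
Local Open Scope classical_set_scope.

Section Lim.
Variable R : realType.
Implicit Types u v : nat -> R.

Lemma h_noninc (m n : nat) : (m <= n)%N -> (n.+1%:R : R)^-1 <= (m.+1%:R)^-1.
Proof. by move=> mn; rewrite lef_pV2 ?posrE // ler_nat. Qed.

Lemma sd_ne u m : sdrop u m !=set0.
Proof. by exists (u m); exists m => /=. Qed.

Lemma sd_lb u m : (forall n, 0 <= u n) -> has_lbound (sdrop u m).
Proof. by move=> H; exists 0 => _ [n _ <-]. Qed.

Lemma sd_ub u m : (forall n, u n <= 1) -> has_ubound (sdrop u m).
Proof. by move=> H; exists 1 => _ [n _ <-]. Qed.

Lemma g_cvg (w : nat -> R) (l : R) : w n @[n --> \oo] --> l ->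
  (fun m => (5 * w m - 2) / 3 - 6 * (m.+1%:R)^-1) @ \oo --> (5 * l - 2) / 3.
Proof.
move=> wl.
have -> : (5 * l - 2) / 3 = (5 * l - 2) / 3 - 6 * 0 by ring.
apply: cvgB.
  apply: cvgMr_tmp; apply: cvgB; [apply: cvgMl_tmp; exact: wl | exact: cvg_cst].
apply: cvgMl_tmp; exact: cvg_harmonic.
Qed.


Lemma linf_aux u v : (forall n, 0 <= u n <= 1) -> (forall n, 0 <= v n <= 1) ->
  (forall n, (5 * u n - 2) / 3 - 6 * (n.+1%:R)^-1 <= v n) ->
  (5 * limn_inf u - 2) / 3 <= limn_inf v.
Proof.
move=> Hu Hv H.
have u0 n : 0 <= u n by case/andP: (Hu n).
have v0 n : 0 <= v n by case/andP: (Hv n).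
have v1 n : v n <= 1 by case/andP: (Hv n).
have u1 n : u n <= 1 by case/andP: (Hu n).
have key m : (5 * infs u m - 2) / 3 - 6 * (m.+1%:R)^-1 <= infs v m.
  rewrite /infs /=; apply: lb_le_inf; first exact: sd_ne.
  move=> _ [n /= mn <-].
  have h1 : inf (sdrop u m) <= u n by apply: ge_inf; [exact: sd_lb|exists n].
  have h2 := h_noninc m n mn; apply: le_trans (H n); apply: lerB; last by rewrite ler_pM2l.
  by rewrite ler_pM2r ?invr_gt0 // lerB // ler_pM2l.
have cinf (w : nat -> R) : (forall n, 0 <= w n <= 1) -> cvgn (infs w).
  move=> Hw; apply: nondecreasing_is_cvgn.
    by apply: nondecreasing_infs; exists 0 => _ [n _ <-]; case/andP: (Hw n).
  exists 1 => _ [n _ <-]; rewrite /infs /=.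
  apply: (@le_trans _ _ (w n)); last by case/andP: (Hw n).
  apply: ge_inf; last by exists n => /=.
  by exists 0 => _ [k _ <-]; case/andP: (Hw k).
have gl := @g_cvg (infs u) (limn (infs u)) (cinf u Hu).
rewrite /limn_inf -(cvg_lim _ gl) //.
apply: ler_lim; [exact: cvgP gl | exact: cinf | exact: nearW].
Qed.

Lemma csup (w : nat -> R) : (forall n, 0 <= w n <= 1) -> cvgn (sups w).
Proof.
  move=> Hw; apply: nonincreasing_is_cvgn.
    by apply: nonincreasing_sups; exists 1 => _ [n _ <-]; case/andP: (Hw n).
  exists 0 => _ [n _ <-]; rewrite /sups /=.
  apply: (@le_trans _ _ (w n)); first by case/andP: (Hw n).
  apply: ub_le_sup; last by exists n => /=.
  by exists 1 => _ [k _ <-]; case/andP: (Hw k).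
Qed.

Lemma lsup_aux u v : (forall n, 0 <= u n <= 1) -> (forall n, 0 <= v n <= 1) ->
  (forall n, (5 * u n - 2) / 3 - 6 * (n.+1%:R)^-1 <= v n) ->
  (5 * limn_sup u - 2) / 3 <= limn_sup v.
Proof.
move=> Hu Hv H.
have u0 n : 0 <= u n by case/andP: (Hu n).
have v0 n : 0 <= v n by case/andP: (Hv n).
have v1 n : v n <= 1 by case/andP: (Hv n).
have u1 n : u n <= 1 by case/andP: (Hu n).
have key m : (5 * sups u m - 2) / 3 - 6 * (m.+1%:R)^-1 <= sups v m.
  have aux : forall a b c : R, a <= (3 * (b + c) + 2) / 5 -> (5 * a - 2) / 3 - c <= b.
    by move=> a b c; lra.
  apply: aux.
  rewrite /sups /=; apply: ge_sup; first exact: sd_ne.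
  move=> _ [n /= mn <-].
  have h1 : v n <= sup (sdrop v m) by apply: ub_le_sup; [exact: sd_ub|exists n].
  have h2 := h_noninc m n mn; have h3 := H n.
  have aux : forall (a b c d e : R), b <= a -> d <= c -> (5 * e - 2) / 3 - d <= b ->
      e <= (3 * (a + c) + 2) / 5 by move=> a b c d e; lra.
  have h4 : 6 / n.+1%:R <= 6 / m.+1%:R :> R by rewrite ler_pM2l.
  exact: aux h1 h4 h3.
have gl := @g_cvg (sups u) (limn (sups u)) (csup u Hu).
rewrite /limn_sup -(cvg_lim _ gl) //.
apply: ler_lim; [exact: cvgP gl | exact: csup | exact: nearW].
Qed.


Lemma ineq_R (z d N : R) : 1 <= N -> 5 * z <= 3 * d + 2 * N + 9 ->
  (5 * (z / N) - 2) / 3 - 6 / (N + 1) <= d / N.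
Proof.
move=> N1 H; rewrite -subr_ge0.
have N0 : N != 0 by apply/negP => /eqP N0; rewrite N0 in N1; lra.
have N10 : N + 1 != 0 by apply/negP => /eqP N2; lra.
have -> : d / N - ((5 * (z / N) - 2) / 3 - 6 / (N + 1)) =
  ((N + 1) * (3 * d - 5 * z + 2 * N) + 18 * N) / (3 * N * (N + 1)).
  by field; rewrite N10 N0.
apply: divr_ge0; last by apply: mulr_ge0; lra.
nra.
Qed.

Lemma ineq_R2 (d m N : R) : 1 <= N -> d <= m -> 0 <= m -> d / N <= 2 * m / (N + 1).
Proof.
move=> N1 H m0; rewrite -subr_ge0.
have N0 : N != 0 by apply/negP => /eqP N0; rewrite N0 in N1; lra.
have N10 : N + 1 != 0 by apply/negP => /eqP N2; lra.
have -> : 2 * m / (N + 1) - d / N = (2 * m * N - d * (N + 1)) / (N * (N + 1))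
  by field; rewrite ?N10 ?N0.
apply: divr_ge0; last by apply: mulr_ge0; lra.
nra.
Qed.

End Lim.


Lemma d_bound m : (forall n, (m <= n)%N -> ~~ undesirable n) ->
  forall N, (d_count N <= m)%N.
Proof.
move=> Hm N; rewrite /d_count.
apply: (@leq_trans (count (fun n => n < m)%N (index_iota 2 N.+1))).
  apply: sub_count => n /= Hn; rewrite ltnNge; apply/negP => /Hm; by rewrite Hn.
rewrite -size_filter -[X in (_ <= X)%N](size_iota 0 m); apply: uniq_leq_size.
  by rewrite filter_uniq // iota_uniq.
by move=> x; rewrite mem_filter mem_iota => /andP[xm _]; rewrite add0n xm.
Qed.

Lemma frac01 (R : realType) (a N : nat) : (a <= N)%N -> 0 <= (a%:R / N%:R : R) <= 1.
Proof.
move=> aN; apply/andP; split; first exact: divr_ge0.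
case: N aN => [|N] aN; first by rewrite invr0 mulr0.
by rewrite ler_pdivrMr ?ltr0n // mul1r ler_nat.
Qed.

Lemma zeros_le (R : realType) N : (zeros_prefix R N <= N)%N.
Proof. by rewrite /zeros_prefix (leq_trans (count_size _ _)) // size_iota. Qed.

Lemma dcount_le N : (d_count N <= N)%N.
Proof.
rewrite /d_count (leq_trans (count_size _ _)) // size_iota; lia.
Qed.

Lemma key_H (R : realType) n :
  (5 * ((zeros_prefix R n)%:R / n%:R) - 2) / 3 - 6 * (n.+1%:R)^-1
    <= ((d_count n)%:R / n%:R : R).
Proof.
case: n => [|n].
  rewrite !invr0 !mulr0; have : (0 : R) <= 6 * 1%:R^-1 by rewrite mulr_ge0.
  lra.
have H : 5 * (zeros_prefix R n.+1)%:R <= 3 * (d_count n.+1)%:R + 2 * n.+1%:R + 9 :> R.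
  have e1 : ((5 * zeros_prefix R n.+1)%N%:R : R) = 5 * (zeros_prefix R n.+1)%:R by rewrite natrM.
  have e2 : ((3 * d_count n.+1 + 2 * n.+1 + 9)%N%:R : R) =
    3 * (d_count n.+1)%:R + 2 * n.+1%:R + 9. by rewrite !natrD ?natrM; ring.
  by rewrite -e1 -e2 ler_nat; exact: count_bound.
have N1 : (1 : R) <= n.+1%:R by rewrite ler1n.
by have := @ineq_R R _ _ _ N1 H; rewrite natr1.
Qed.

Theorem theorem3p2 (R : realType) :
  (5 * r_inf R - 2) / 3 <= limn_inf (fun N : nat => (d_count N)%:R / N%:R : R) /\
  (5 * r_sup R - 2) / 3 <= limn_sup (fun N : nat => (d_count N)%:R / N%:R : R) /\
  (r_sup R > 2 / 5 -> forall m : nat, exists n : nat, (m <= n)%N /\ undesirable n).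
Proof.
have Hu n : 0 <= ((zeros_prefix R n)%:R / n%:R : R) <= 1 by apply: frac01; exact: zeros_le.
have Hv n : 0 <= ((d_count n)%:R / n%:R : R) <= 1 by apply: frac01; exact: dcount_le.
have P2 : (5 * r_sup R - 2) / 3 <= limn_sup (fun N : nat => (d_count N)%:R / N%:R : R).
  by apply: lsup_aux => // n; exact: key_H.
split; first by apply: linf_aux => // n; exact: key_H.
split => // Hr m.
case: (pselect (exists n, (m <= n)%N /\ undesirable n)) => // Hno; exfalso.
have Hm : forall n, (m <= n)%N -> ~~ undesirable n.
  by move=> n mn; apply/negP => un; apply: Hno; exists n.
have dB := @d_bound m Hm.
set v := (fun N : nat => (d_count N)%:R / N%:R : R) in P2.
have vb n : v n <= 2 * m%:R * (n.+1%:R)^-1.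
  rewrite /v; case: n => [|n]; first by rewrite invr0 mulr0 mulr_ge0 // mulr_ge0.
  have N1 : (1 : R) <= n.+1%:R by rewrite ler1n.
  have dm : ((d_count n.+1)%:R : R) <= m%:R by rewrite ler_nat.
  by have := @ineq_R2 R _ _ _ N1 dm (ler0n _ _); rewrite natr1.
have sb k : sups v k <= 2 * m%:R * (k.+1%:R)^-1.
  rewrite /sups /=; apply: ge_sup; first exact: sd_ne.
  move=> _ [n /= kn <-]; apply: (le_trans (vb n)).
  by apply: ler_wpM2l; [rewrite mulr_ge0 | exact: h_noninc].
have L : limn_sup v <= 0.
  have gl : (fun k => 2 * m%:R * (k.+1%:R : R)^-1) @ \oo --> (0 : R).
    rewrite -(mulr0 (2 * m%:R : R)); apply: cvgMl_tmp; exact: cvg_harmonic.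
  rewrite /limn_sup -(cvg_lim _ gl) //.
  apply: ler_lim; [exact: csup | exact: cvgP gl | exact: nearW].
move: P2; rewrite -/v; lra.
Qed.
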